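(* Let $n\ge1$ and let $V=\bigoplus_{i=1}^{2n-1}V_i$, $W=\bigoplus_{i=1}^{2n-1}W_i$ be graded complex vector spaces with $\dim V_i=\dim V_{2n-i}$, $W_i=0$ for $i\ne n$, $\dim W_n=2$, and satisfying the nonemptiness condition below. Let $\sigma_n$ be an involution of $W_n$, $\langle\cdot,\cdot\rangle_n$ a nondegenerate skew-symmetric bilinear form on $W_n$, $(w,y)_n:=\langle w,\sigma_n(y)\rangle_n$, and $x\mapsto x^{\mathbf t}$ the transpose anti-automorphism of $\mathrm{End}(W_n)$ with respect to $(\cdot,\cdot)_n$. Then for every $(B_{i,j},\Gamma_i,\Delta_i)\in\Lambda^{\mathrm A_{2n-1}}(V,W)$ and every $1\le j\le n$, \[(\Delta_nB_{n,n-j+1,n}\Gamma_n)^{\mathbf t}=(-1)^j\,\sigma_n\Delta_nB_{n,n+j-1,n}\Gamma_n\sigma_n.\]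
   Context: $B_{i,j}$ ($|i-j|=1$) is a linear map $V_j\to V_i$, $\Gamma_i:W_i\to V_i$, $\Delta_i:V_i\to W_i$. $\Lambda^{\mathrm A_{2n-1}}(V,W)$ is the set of tuples satisfying (with $B_{0,1},B_{1,0},B_{2n,2n-1},B_{2n-1,2n}$ zero): $B_{i,i+1}B_{i+1,i}-B_{i,i-1}B_{i-1,i}=\Gamma_i\Delta_i$ for $1\le i\le n-1$; $-B_{n,n-1}B_{n-1,n}-B_{n,n+1}B_{n+1,n}=\Gamma_n\Delta_n$; $B_{i,i-1}B_{i-1,i}-B_{i,i+1}B_{i+1,i}=\Gamma_i\Delta_i$ for $n+1\le i\le2n-1$. Path notation: $B_{n,n-j+1,n}=B_{n,n-1}B_{n-1,n-2}\cdots B_{n-j+2,n-j+1}B_{n-j+1,n-j+2}\cdots B_{n-1,n}$ (the composite along the path $n\to n-1\to\dots\to n-j+1\to\dots\to n$), and similarly $B_{n,n+j-1,n}=B_{n,n+1}\cdots B_{n+j-2,n+j-1}B_{n+j-1,n+j-2}\cdots B_{n+1,n}$; for $j=1$ both are $\mathrm{id}_{V_n}$. Nonemptiness condition: with $v_i=\dim V_i$, put $s_1=1-v_1$ and $s_i=1-v_i+v_{i-1}$ for $2\le i\le n$; then $s_i\in\{-1,0,1\}$ for all $i$ and $|\{i:s_i\ne0\}|\le n$. *)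

(* Defs.v *)
From mathcomp Require Import all_boot all_algebra.
From mathcomp Require Import complex.
From mathcomp Require Import reals Rstruct.
Set Implicit Arguments. Unset Strict Implicit. Unset Printing Implicit Defensive.
Import GRing.Theory.
Local Open Scope ring_scope.

Definition C : fieldType := Rdefinitions.R[i].

(* Linear maps are matrices acting on column
   vectors, so a map V_j -> V_i is a 'M_(v i, v j) and composition is *m.
     Bl i = B_{i,i-1} : V_{i-1} -> V_i   ('M_(v i, v i.-1))
     Br i = B_{i-1,i} : V_i -> V_{i-1}   ('M_(v i.-1, v i))
   so B_{i,i+1} = Br i.+1 and B_{i+1,i} = Bl i.+1. *)

(* Ldown a k = B_{a,a-1} B_{a-1,a-2} ... B_{a-k+1,a-k} B_{a-k,a-k+1} ... B_{a-1,a},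
   i.e. the loop a -> a-1 -> ... -> a-k -> ... -> a; Ldown a 0 = id. *)
Fixpoint Ldown (v : nat -> nat) (Bl : forall i, 'M[C]_(v i, v i.-1))
  (Br : forall i, 'M[C]_(v i.-1, v i)) (k a : nat) : 'M[C]_(v a) :=
  match k with
  | 0 => 1%:M
  | k'.+1 => Bl a *m Ldown Bl Br k' a.-1 *m Br a
  end.

(* Lup a k = B_{a,a+1} ... B_{a+k-1,a+k} B_{a+k,a+k-1} ... B_{a+1,a}. *)
Fixpoint Lup (v : nat -> nat) (Bl : forall i, 'M[C]_(v i, v i.-1))
  (Br : forall i, 'M[C]_(v i.-1, v i)) (k a : nat) : 'M[C]_(v a) :=
  match k with
  | 0 => 1%:M
  | k'.+1 => Br a.+1 *m Lup Bl Br k' a.+1 *m Bl a.+1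
  end.

(* B_{n,n-j+1,n} and B_{n,n+j-1,n} (for j >= 1, the loop has depth j-1). *)
Definition pathDown v Bl Br (n j : nat) : 'M[C]_(v n) := @Ldown v Bl Br j.-1 n.
Definition pathUp v Bl Br (n j : nat) : 'M[C]_(v n) := @Lup v Bl Br j.-1 n.

(* The tuple (B, Gamma, Delta) lies in Lambda^{A_{2n-1}}(V,W), where W_i = 0
   for i <> n (so Gamma_i Delta_i = 0 for i <> n) and W_n has dimension 2.
   Boundary maps B_{0,1}, B_{1,0}, B_{2n,2n-1}, B_{2n-1,2n} are zero. *)
Definition in_Lambda (n : nat) (v : nat -> nat)
  (Bl : forall i, 'M[C]_(v i, v i.-1)) (Br : forall i, 'M[C]_(v i.-1, v i))
  (Gam : 'M[C]_(v n, 2)) (Del : 'M[C]_(2, v n)) : Prop :=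
  [/\ Bl 1%N = 0 /\ Br 1%N = 0, Bl (2 * n)%N = 0 /\ Br (2 * n)%N = 0,
      (forall i, (1 <= i <= n - 1)%N ->
         Br i.+1 *m Bl i.+1 - Bl i *m Br i = 0),
      - (Bl n *m Br n) - Br n.+1 *m Bl n.+1 = Gam *m Del &
      (forall i, (n + 1 <= i <= 2 * n - 1)%N ->
         Bl i *m Br i - Br i.+1 *m Bl i.+1 = 0)].

Definition s_dim (v : nat -> nat) (i : nat) : int :=
  if i == 1%N then 1 - (v 1%N)%:Z else 1 - (v i)%:Z + (v i.-1)%:Z.

Definition nonempty_cond (n : nat) (v : nat -> nat) : Prop :=
  (forall i, (1 <= i <= n)%N -> s_dim v i \in [:: -1; 0; 1]) /\
  (count (fun i => s_dim v i != 0) (iota 1 n) <= n)%N.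

Definition bform (G : 'M[C]_2) (w y : 'cV[C]_2) : C := (w^T *m G *m y) 0 0.

Definition skew_nondeg (G : 'M[C]_2) : Prop := G^T = - G /\ G \in unitmx.

Definition is_form_transpose (frm : 'cV[C]_2 -> 'cV[C]_2 -> C)
  (x xt : 'M[C]_2) : Prop :=
  forall w y : 'cV[C]_2, frm (x *m w) y = frm w (xt *m y).

(* Main.v *)
Require Import Defs.
From mathcomp Require Import all_boot all_algebra.
From mathcomp Require Import complex.
From mathcomp Require Import reals Rstruct.
From mathcomp Require Import ring zify.
Set Implicit Arguments. Unset Strict Implicit. Unset Printing Implicit Defensive.
Import GRing.Theory Num.Theory.
Local Open Scope ring_scope.
Lemma sum2 (R : nmodType) (F : 'I_2 -> R) : \sum_(i < 2) F i = F 0 + F 1.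
Proof.
rewrite big_ord_recl big_ord_recl big_ord0 addr0; congr (F _ + F _); exact: val_inj.
Qed.

Lemma det2 (R : comPzRingType) (A : 'M[R]_2) :
  \det A = A 0 0 * A 1 1 - A 0 1 * A 1 0.
Proof.
rewrite (expand_det_row _ 0) sum2 /cofactor !det_mx11 !mxE /=.
rewrite !expr0 !expr1 !mul1r !mulN1r.
have -> : lift 0 0 = 1 :> 'I_2 by apply/val_inj.
have -> : lift 1 0 = 0 :> 'I_2 by apply/val_inj.
by rewrite mulrN.
Qed.

Lemma mx2P (R : Type) (A B : 'M[R]_2) :
  A 0 0 = B 0 0 -> A 0 1 = B 0 1 -> A 1 0 = B 1 0 -> A 1 1 = B 1 1 -> A = B.
Proof.
move=> h00 h01 h10 h11; apply/matrixP => i j.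
have E : forall k : 'I_2, k = 0 \/ k = 1.
  by case=> [[|[|//]]] Hk; [left|right]; apply/val_inj.
by case: (E i) => ->; case: (E j) => ->.
Qed.

Lemma solve2 (K : comPzRingType) (t a00 a01 a10 a11 c00 c01 c10 c11 : K) :
  (1 - t * a00) * (1 - t * a11) - (t * a01) * (t * a10) = 1 ->
  a00 + a11 = t * (a00 * a11 - a01 * a10) ->
  (1 - t * a00) * c00 - t * a01 * c10 = a00 ->
  (1 - t * a00) * c01 - t * a01 * c11 = a01 ->
  - (t * a10) * c00 + (1 - t * a11) * c10 = a10 ->
  - (t * a10) * c01 + (1 - t * a11) * c11 = a11 ->
  [/\ c00 = a00 - (a00 + a11), c01 = a01, c10 = a10 & c11 = a11 - (a00 + a11)].
Proof.
set m00 := 1 - t * a00; set m11 := 1 - t * a11; set m01 := - (t * a01);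
set m10 := - (t * a10).
move=> hd ht e1 e2 e3 e4.
have hdet : m00 * m11 - m01 * m10 = 1 by rewrite -hd /m01 /m10; ring.
have e1' : m00 * c00 + m01 * c10 = a00 by rewrite -e1 /m01; ring.
have e2' : m00 * c01 + m01 * c11 = a01 by rewrite -e2 /m01; ring.
have rc : forall x y a b, m00 * x + m01 * y = a -> m10 * x + m11 * y = b ->
    x = m11 * a - m01 * b /\ y = m00 * b - m10 * a.
  move=> x y a b h1 h2; rewrite -h1 -h2; split.
    by rewrite -[LHS]mul1r -hdet; ring.
  by rewrite -[LHS]mul1r -hdet; ring.
have [-> ->] := rc _ _ _ _ e1' e3.
have [-> ->] := rc _ _ _ _ e2' e4.
rewrite ht /m00 /m11 /m01 /m10; split; ring.
Qed.
Lemma key (K : idomainType) (t a b c d : K) : t*(t*(a*d - b*c) - (a+d)) = (1 - t*a)*(1 - t*d) - t*b*(t*c) - 1.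
Proof. ring. Qed.

Lemma solve2mx (K : idomainType) (t : K) (A Cm : 'M[K]_2) : t != 0 ->
  \det (1%:M - t *: A) = 1 -> (1%:M - t *: A) *m Cm = A ->
  Cm = A - (\tr A)%:M.
Proof.
move=> tn0; rewrite det2 !mxE /= => hd hM.
have hE : forall i j, ((1%:M - t *: A) *m Cm) i j = A i j by move=> i j; rewrite hM.
have e1 := hE 0 0; have e2 := hE 0 1; have e3 := hE 1 0; have e4 := hE 1 1.
rewrite !mxE !sum2 !mxE /= in e1 e2 e3 e4.
rewrite ?mulr1n ?mulr0n ?sub0r in hd e1 e2 e3 e4.
rewrite mulrNN in hd.
rewrite mulNr in e1; rewrite mulNr in e2.
have ht : A 0 0 + A 1 1 = t * (A 0 0 * A 1 1 - A 0 1 * A 1 0).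
  apply/eqP; rewrite -subr_eq0; apply/eqP.
  have : t * (t * (A 0 0 * A 1 1 - A 0 1 * A 1 0) - (A 0 0 + A 1 1)) = 0.
    by rewrite key hd subrr.
  move/eqP; rewrite mulf_eq0 (negbTE tn0) /= => /eqP h.
  by rewrite -opprB h oppr0.
have [h00 h01 h10 h11] := solve2 hd ht e1 e2 e3 e4.
have trE : \tr A = A 0 0 + A 1 1 by rewrite /mxtrace sum2.
apply: mx2P; rewrite !mxE /= trE ?mulr1n ?mulr0n ?subr0 //.
Qed.
Lemma geoml (R : pzRingType) (x : R) d : (1 - x) * \sum_(i < d) x ^+ i = 1 - x ^+ d.
Proof. by rewrite -opprB mulNr -subrX1 opprB. Qed.

Lemma geomr (R : pzRingType) (x : R) d : (\sum_(i < d) x ^+ i) * (1 - x) = 1 - x ^+ d.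
Proof.
elim: d => [|d IH]; first by rewrite big_ord0 mul0r expr0 subrr.
rewrite big_ord_recr /= mulrDl IH mulrBr mulr1 -exprSr.
by rewrite addrA subrK.
Qed.

Lemma sylvester (R : comPzRingType) m k (U : 'M[R]_(m, k)) (V : 'M_(k, m)) :
  \det (1%:M - U *m V) = \det (1%:M - V *m U).
Proof.
have e1 : block_mx 1%:M U V 1%:M =
   block_mx 1%:M 0 V 1%:M *m block_mx 1%:M U 0 (1%:M - V *m U).
  rewrite mulmx_block ?mul1mx ?mul0mx ?mulmx0 ?mulmx1 ?addr0 ?add0r.
  by rewrite addrC subrK.
have e2 : block_mx 1%:M U V 1%:M =
   block_mx (1%:M - U *m V) U 0 1%:M *m block_mx 1%:M 0 V 1%:M.
  rewrite mulmx_block ?mul1mx ?mul0mx ?mulmx0 ?mulmx1 ?addr0 ?add0r.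
  by rewrite subrK.
have := congr1 determinant e1; rewrite e2 !det_mulmx det_ublock det_lblock.
by rewrite det_ublock !det1 !mul1r !mulr1 => ->.
Qed.

Lemma zm1 (V : zmodType) (r a s : V) : r + (a - r - (a - s)) = s.
Proof.
rewrite opprB addrC -!addrA [- a + r]addrC addrCA.
by rewrite (addrCA a s) (addrCA a r) subrr addr0 addrCA addNr addr0.
Qed.

Lemma mxsubE (R : zmodType) m n (M Z : 'M[R]_(m, n)) i j :
  (M - Z) i j = M i j - Z i j.
Proof. by rewrite !mxE. Qed.

Lemma mxscE (R : pzSemiRingType) n (c : R) (i j : 'I_n) : (c%:M : 'M_n) i j = c *+ (i == j).
Proof. by rewrite mxE. Qed.

Section Key.
Variable F : fieldType.
Definition liftp {p q} (M : 'M[F]_(p, q)) : 'M[{poly F}]_(p, q) := map_mx polyC M.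

Lemma powY m (M : 'M[F]_m) i : ('X *: liftp M) ^+ i = 'X ^+ i *: liftp (M ^+ i).
Proof.
elim: i => [|i IH]; first by rewrite !expr0 scale1r /liftp map_mx1.
rewrite exprS IH -mulmxE -scalemxAl -scalemxAr scalerA -exprS.
by rewrite /liftp -map_mxM mulmxE -exprS.
Qed.

Lemma det_unip m (M : 'M[F]_m) d : M ^+ d = 0 -> \det (1%:M - 'X *: liftp M) = 1.
Proof.
move=> hM.
have h1 : (1%:M - 'X *: liftp M) * \sum_(i < d) ('X *: liftp M) ^+ i = 1.
  by rewrite geoml powY hM /liftp map_mx0 scaler0 subr0.
have hu : \det (1%:M - 'X *: liftp M) \is a GRing.unit.
  have := congr1 determinant h1; rewrite -mulmxE det_mulmx det1 => h.
  by apply/unitrPr; exists (\det (\sum_(i < d) ('X *: liftp M) ^+ i)).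
move: hu; rewrite poly_unitE => /andP [/eqP hs _].
rewrite [LHS]size1_polyC ?hs //.
rewrite -horner_coef0 -horner_evalE -det_map_mx.
have -> : map_mx (horner_eval 0) (1%:M - 'X *: liftp M) = 1%:M.
  apply/matrixP => i j; rewrite !mxE /= horner_evalE hornerD hornerN.
  by rewrite hornerM hornerX mul0r subr0 hornerMn hornerC.
by rewrite det1.
Qed.

Lemma liftp_mul p q r (A : 'M[F]_(p, q)) (B : 'M_(q, r)) : liftp (A *m B) = liftp A *m liftp B.
Proof. exact: map_mxM. Qed.

Lemma coef_loop m (M : 'M[F]_m) (Gam : 'M_(m, 2)) (Del : 'M_(2, m)) d k a b :
  (k < d)%N ->
  ((liftp Del *m (\sum_(i < d) ('X *: liftp M) ^+ i) *m liftp Gam) a b)`_k =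
  (Del *m M ^+ k *m Gam) a b.
Proof.
move=> hk.
rewrite mulmx_sumr mulmx_suml summxE coef_sum.
rewrite (bigD1 (Ordinal hk)) //= big1 ?addr0.
  by rewrite powY -scalemxAr -scalemxAl -!liftp_mul !mxE mulrC coefCM coefXn eqxx mulr1.
move=> i /negbTE hi; rewrite powY -scalemxAr -scalemxAl -!liftp_mul !mxE mulrC coefCM coefXn.
suff -> : (k == i) = false by rewrite mulr0.
by apply/negbTE; apply: contraFN hi => /eqP e; apply/eqP/val_inj.
Qed.

Lemma key_loop m (P N : 'M[F]_m) (Gam : 'M_(m, 2)) (Del : 'M_(2, m)) d :
  N = Gam *m Del -> P ^+ d = 0 -> (P + N) ^+ d = 0 ->
  forall k, Del *m (P + N) ^+ k *m Gam =
            Del *m P ^+ k *m Gam - (\tr (Del *m P ^+ k *m Gam))%:M.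
Proof.
move=> hN hP hX k.
set X := P + N in hX *.
set YP := 'X *: liftp P; set YX := 'X *: liftp X.
set R := \sum_(i < d) YP ^+ i; set S := \sum_(i < d) YX ^+ i.
have YPd : YP ^+ d = 0 by rewrite /YP powY hP /liftp map_mx0 scaler0.
have YXd : YX ^+ d = 0 by rewrite /YX powY hX /liftp map_mx0 scaler0.
have hR1 : (1 - YP) * R = 1 by rewrite geoml YPd subr0.
have hR2 : R * (1 - YP) = 1 by rewrite geomr YPd subr0.
have hS1 : (1 - YX) * S = 1 by rewrite geoml YXd subr0.
set Gt := liftp Gam; set Dt := liftp Del.
have YXE : YX = YP + 'X *: (Gt *m Dt).
  by rewrite /YX /YP /X /liftp map_mxD scalerDr hN map_mxM.
have SR : S = R + R *m ('X *: (Gt *m Dt)) *m S.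
  have -> : R *m ('X *: (Gt *m Dt)) *m S = R * (YX - YP) * S.
    by rewrite YXE addrC addKr !mulmxE.
  rewrite mulrBr mulrBl.
  have -> : R * YX * S = R * S - R * ((1 - YX) * S).
    by rewrite mulrBl mul1r mulrBr opprB addrC subrK mulrA.
  rewrite hS1 mulr1.
  have -> : R * YP * S = R * S - (R * (1 - YP)) * S.
    by rewrite mulrBr mulr1 mulrBl opprB addrC subrK.
  rewrite hR2 mul1r.
  (* S = R + ((R*S - R) - (R*S - S)) *)
  by rewrite zm1.
set A := Dt *m R *m Gt; set Cc := Dt *m S *m Gt.
have hAC : (1%:M - 'X *: A) *m Cc = A.
  have hC : Cc = A + 'X *: (A *m Cc).
    rewrite /Cc {1}SR mulmxDr mulmxDl -/A; congr (_ + _).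
    rewrite -scalemxAr -scalemxAl -scalemxAr -scalemxAl; congr (_ *: _).
    by rewrite /A !mulmxA.
  by rewrite mulmxBl mul1mx -scalemxAl {1}hC addrK.
have hdet : \det (1%:M - 'X *: A) = 1.
  have -> : 'X *: A = (Dt *m R) *m ('X *: Gt) by rewrite /A scalemxAr.
  rewrite sylvester.
  have -> : 1%:M - 'X *: Gt *m (Dt *m R) = (1 - YX) * R.
    rewrite idmxE -{1}hR1 YXE opprD addrA mulrDl mulNr -!mulmxE.
    by rewrite !mulmxBl -!scalemxAl mulmxA.
  have d1 : \det (1 - YX) = 1 by rewrite -idmxE; exact: det_unip hX.
  have d2 : \det (1 - YP) = 1 by rewrite -idmxE; exact: det_unip hP.
  have dR : \det R = 1.
    have := congr1 determinant hR2; rewrite -mulmxE det_mulmx d2 mulr1 => ->.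
    by rewrite det1.
  by rewrite -mulmxE det_mulmx d1 dR mulr1.
have hX0 : ('X : {poly F}) != 0 by rewrite polyX_eq0.
have hCA := solve2mx hX0 hdet hAC.
case: (ltnP k d) => hk; last first.
  have e : forall Z : 'M[F]_m, Z ^+ d = 0 -> Z ^+ k = 0.
    by move=> Z hZ; rewrite -(subnK hk) exprD hZ mulr0.
  by rewrite (e _ hP) (e _ hX) mulmx0 mul0mx mxtrace0 raddf0 subr0.
apply/matrixP => a b.
have E1 : (Cc a b)`_k = (Del *m X ^+ k *m Gam) a b by apply: coef_loop.
have E2 : forall i j, (A i j)`_k = (Del *m P ^+ k *m Gam) i j.
  by move=> i j; apply: coef_loop.
rewrite -E1 hCA mxsubE mxscE coefB coefMn E2.
rewrite mxsubE mxscE; congr (_ - _ *+ _).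
rewrite /mxtrace coef_sum; apply: eq_bigr => i _; exact: E2.
Qed.
End Key.

Lemma UVpow (R : pzRingType) p q (U : 'M[R]_(p, q)) (V : 'M_(q, p)) k :
  U *m (V *m U) ^+ k *m V = (U *m V) ^+ k.+1.
Proof.
elim: k => [|k IH]; first by rewrite !expr0 !expr1 -idmxE mulmx1.
rewrite exprSr -mulmxE !mulmxA IH -mulmxA mulmxE -exprSr //.
Qed.

Lemma powNmx (R : pzRingType) m (M : 'M[R]_m) k : (- M) ^+ k = (-1) ^+ k *: M ^+ k.
Proof.
elim: k => [|k IH]; first by rewrite !expr0 scale1r.
by rewrite !exprSr IH -!mulmxE mulmxN -scalemxAl mulrN1 scaleNr.
Qed.

Lemma two_nz : (2 : C) != 0.
Proof.
have h := (pnatr_eq0 Rdefinitions.R[i] 2).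
change ((2 : Rdefinitions.R[i]) != 0). by rewrite h.
Qed.

Lemma skew2 (G a : 'M[C]_2) : G^T = - G -> a^T *m G = G *m ((\tr a)%:M - a).
Proof.
move=> hG.
have g : forall i j, G j i = - G i j.
  by move=> i j; have := congr1 (fun M : 'M[C]_2 => M i j) hG; rewrite !mxE.
have d0 : forall i, G i i = 0.
  move=> i; have h := g i i.
  have : 2 * G i i = 0 by rewrite mulr_natl mulr2n {1}h addNr.
  by move/eqP; rewrite mulf_eq0 (negbTE two_nz) /= => /eqP.
have h00 := d0 0; have h11 := d0 1; have h10 := g 0 1.
have trE : \tr a = a 0 0 + a 1 1 by rewrite /mxtrace sum2.
by apply: mx2P; rewrite !mxE !sum2 !mxE /= trE ?h00 ?h11 ?h10 ?mulr1n ?mulr0n; ring.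
Qed.

Section Quiver.
Variables (n : nat) (v : nat -> nat).
Variables (Bl : forall i, 'M[C]_(v i, v i.-1)) (Br : forall i, 'M[C]_(v i.-1, v i)).
Hypothesis hBl1 : Bl 1%N = 0.
Hypothesis hBr2n : Br (2 * n)%N = 0.
Hypothesis hrelL : forall i, (1 <= i <= n - 1)%N -> Br i.+1 *m Bl i.+1 - Bl i *m Br i = 0.
Hypothesis hrelR : forall i, (n + 1 <= i <= 2 * n - 1)%N ->
  Bl i *m Br i - Br i.+1 *m Bl i.+1 = 0.

Lemma LdownE k a : (1 <= a <= n)%N -> Ldown Bl Br k a = (Bl a *m Br a) ^+ k.
Proof.
elim: k a => [|k IH] a ha; first by rewrite expr0 /= idmxE.
case: a ha => [//|[|a']] ha /=.
  by rewrite hBl1 !mul0mx expr0n.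
rewrite IH; last by move: ha; rewrite !ltnS => /andP[_ h]; rewrite (ltnW h).
have e : Br a'.+2 *m Bl a'.+2 = Bl a'.+1 *m Br a'.+1.
  apply/eqP; rewrite -subr_eq0; apply/eqP; apply: hrelL.
  by move: ha => /andP[_ h]; apply/andP; split => //; rewrite leq_subRL // (leq_trans _ h).
by rewrite -e UVpow.
Qed.

Lemma Lnil a : (1 <= a <= n)%N -> (Bl a *m Br a) ^+ a = 0.
Proof.
elim: a => [//|[|a] IH] ha.
  by rewrite hBl1 mul0mx expr1.
have e : Br a.+2 *m Bl a.+2 = Bl a.+1 *m Br a.+1.
  apply/eqP; rewrite -subr_eq0; apply/eqP; apply: hrelL.
  by move: ha => /andP[_ h]; apply/andP; split => //; rewrite leq_subRL // (leq_trans _ h).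
rewrite -UVpow e IH ?mulmx0 ?mul0mx //.
by move: ha => /andP[_ h]; rewrite (ltnW h).
Qed.

Lemma LupE k a : (n <= a)%N -> (a < 2 * n)%N -> Lup Bl Br k a = (Br a.+1 *m Bl a.+1) ^+ k.
Proof.
elim: k a => [|k IH] a h1 h2; first by rewrite expr0 /= idmxE.
rewrite /=.
case: (ltnP a.+1 (2 * n)) => h3.
  rewrite IH //; last exact: leqW.
  have e : Br a.+2 *m Bl a.+2 = Bl a.+1 *m Br a.+1.
    apply/esym/eqP; rewrite -subr_eq0; apply/eqP; apply: hrelR.
    by rewrite addn1 ltnS h1 /= leq_subRL // ?addn1 // (leq_trans _ h3).
  by rewrite e UVpow.
have E : a.+1 = (2 * n)%N by apply/eqP; rewrite eqn_leq h2 h3.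
have hz : Br a.+1 = 0 by move: hBr2n; rewrite -E.
by rewrite hz !mul0mx expr0n.
Qed.

Lemma Rnil e a : (a + e.+1 = 2 * n)%N -> (n <= a)%N -> (Br a.+1 *m Bl a.+1) ^+ e.+1 = 0.
Proof.
elim: e a => [|e IH] a ha hn.
  have E : a.+1 = (2 * n)%N by rewrite -ha addn1.
  have hz : Br a.+1 = 0 by move: hBr2n; rewrite -E.
  by rewrite hz mul0mx expr1.
have e1 : Br a.+2 *m Bl a.+2 = Bl a.+1 *m Br a.+1.
  apply/esym/eqP; rewrite -subr_eq0; apply/eqP; apply: hrelR.
  by rewrite addn1 ltnS hn /= leq_subRL // -ha; lia.
rewrite -UVpow -e1 IH ?mulmx0 ?mul0mx //; last exact: leqW.
by rewrite -ha addSnnS.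
Qed.
End Quiver.

Lemma sign_aux (k : nat) : (-1) ^+ k.+1 * (-1) ^+ k = - 1 :> C.
Proof. by rewrite -exprD -signr_odd addSn oddS addnn odd_double /= expr1. Qed.

Unset Implicit Arguments.
Theorem lemma4p11 (n : nat) (hn : (1 <= n)%N) (v : nat -> nat)
  (hsym : forall i, (1 <= i <= 2 * n - 1)%N -> v i = v (2 * n - i)%N)
  (hne : nonempty_cond n v)
  (sigma : 'M[C]_2) (hsigma : sigma *m sigma = 1%:M)
  (G : 'M[C]_2) (hG : skew_nondeg G)
  (Bl : forall i, 'M[C]_(v i, v i.-1)) (Br : forall i, 'M[C]_(v i.-1, v i))
  (Gam : 'M[C]_(v n, 2)) (Del : 'M[C]_(2, v n))
  (hL : in_Lambda Bl Br Gam Del) :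
  forall j : nat, (1 <= j <= n)%N ->
    is_form_transpose (fun w y => bform G w (sigma *m y))
      (Del *m pathDown Bl Br n j *m Gam)
      ((-1) ^+ j *: (sigma *m Del *m pathUp Bl Br n j *m Gam *m sigma)).
Proof.
move=> j /andP [hj1 hjn].
case: hL => [[hBl1 hBr1] [hBl2n hBr2n] hrL hN hrR].
set k := j.-1.
have hjk : j = k.+1 by rewrite /k prednK.
have hn1 : (1 <= n <= n)%N by rewrite hn leqnn.
have hn2 : (n < 2 * n)%N by rewrite mul2n -addnn -{1}[n]addn0 ltn_add2l.
set P := Bl n *m Br n; set Q := Br n.+1 *m Bl n.+1; set N := Gam *m Del.
have hD : pathDown Bl Br n j = P ^+ k by exact: (LdownE hBl1 hrL k hn1).
have hU : pathUp Bl Br n j = Q ^+ k by exact: (LupE hBr2n hrR k (leqnn n) hn2).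
have hQ : Q = - (P + N) by rewrite /N -hN addrA subrr add0r opprK.
have hPn : P ^+ n = 0 by exact: (Lnil hBl1 hrL hn1).
have hQn : Q ^+ n = 0.
  have := Rnil hBr2n hrR (e := n.-1) (a := n); rewrite prednK //; apply => //.
  by rewrite addnn mul2n.
have hXn : (P + N) ^+ n = 0 by rewrite -[P + N]opprK -hQ powNmx hQn scaler0.
have key := key_loop (erefl N) hPn hXn k.
rewrite hD hU hQ powNmx.
set a := Del *m P ^+ k *m Gam.
have hB : (-1) ^+ j *: (sigma *m Del *m ((-1) ^+ k *: (P + N) ^+ k) *m Gam *m sigma)
    = sigma *m ((\tr a)%:M - a) *m sigma.
  rewrite -(scalemxAr ((-1) ^+ k) (sigma *m Del)) -!scalemxAl scalerA hjk sign_aux scaleN1r.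
  have -> : sigma *m Del *m (P + N) ^+ k *m Gam *m sigma =
      sigma *m (Del *m (P + N) ^+ k *m Gam) *m sigma by rewrite !mulmxA.
  by rewrite key -mulNmx -mulmxN opprB.
rewrite hB => w y; rewrite /bform.
have s1 : sigma *m (sigma *m ((\tr a)%:M - a) *m sigma *m y) = ((\tr a)%:M - a) *m sigma *m y.
  by rewrite !mulmxA hsigma mul1mx.
rewrite s1 trmx_mul.
have := skew2 a (proj1 hG).
move=> h; rewrite !mulmxA -(mulmxA w^T a^T G) h !mulmxA.
by [].
Qed.
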